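(* Let $(G,+)$ be a Polish group and let $P \subseteq G$ be a perfect set. Then there is a perfect set $Q \subseteq P$ which is skew.
   Context: The group $(G,+)$ is written additively (not necessarily abelian), with $x-y=x+(-y)$. A set is perfect if it is closed and has no isolated points. A set $Z \subseteq G$ is skew if for all $x,y,v,w\in Z$: if $x\neq y$, $v\neq w$ and $\{x,y\}\neq\{v,w\}$, then $x-y\neq v-w$. *)

(* Defs.v *)
From HB Require Import structures.
From mathcomp Require Import all_boot all_order all_algebra.
From mathcomp Require Import all_classical all_reals all_analysis.
From Stdlib Require Import Reals.
Set Implicit Arguments. Unset Strict Implicit. Unset Printing Implicit Defensive.
Local Open Scope classical_set_scope.

Definition is_metric (T : Type) (d : T -> T -> R) : Prop :=
  (forall x y, Rle 0 (d x y)) /\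
  (forall x y, d x y = 0%R <-> x = y) /\
  (forall x y, d x y = d y x) /\
  (forall x y z, Rle (d x z) (Rplus (d x y) (d y z))).

Definition metric_induces_topology (T : topologicalType) (d : T -> T -> R) : Prop :=
  forall (x : T) (U : set T),
    nbhs x U <-> exists e : R, Rlt 0 e /\ (forall y, Rlt (d x y) e -> U y).

Definition metric_complete (T : topologicalType) (d : T -> T -> R) : Prop :=
  forall u : nat -> T,
    (forall e : R, Rlt 0 e -> exists N : nat,
        forall m n : nat, (N <= m)%N -> (N <= n)%N -> Rlt (d (u m) (u n)) e) ->
    exists l : T, u @ \oo --> l.

Definition completely_metrizable (T : topologicalType) : Prop :=
  exists d : T -> T -> R,
    is_metric d /\ metric_induces_topology d /\ metric_complete d.

Definition separable_space (T : topologicalType) : Prop :=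
  exists D : set T, countable D /\ closure D = [set: T].

Definition polish_space (T : topologicalType) : Prop :=
  separable_space T /\ completely_metrizable T.

Definition is_topological_group (T : topologicalType)
    (add : T -> T -> T) (opp : T -> T) (zero : T) : Prop :=
  (forall x y z, add x (add y z) = add (add x y) z) /\
  (forall x, add zero x = x) /\ (forall x, add x zero = x) /\
  (forall x, add (opp x) x = zero) /\ (forall x, add x (opp x) = zero) /\
  continuous (fun p : T * T => add p.1 p.2) /\ continuous opp.

Definition skew_set (T : Type) (add : T -> T -> T) (opp : T -> T) (Z : set T) : Prop :=
  forall x y v w, Z x -> Z y -> Z v -> Z w ->
    x <> y -> v <> w -> ~ ((x = v /\ y = w) \/ (x = w /\ y = v)) ->
    add x (opp y) <> add v (opp w).

(* Main.v *)
Require Import Defs.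
From HB Require Import structures.
From mathcomp Require Import all_boot all_order all_algebra.
From mathcomp Require Import all_classical all_reals all_analysis.
From Stdlib Require Import Reals Lra Lia List Classical.
From mathcomp Require Import zify.
Local Open Scope classical_set_scope.
Local Open Scope R_scope.

Section S.
Variable G : topologicalType.
Variables (add : G -> G -> G) (opp : G -> G) (zero : G).
Variable d : G -> G -> R.
Hypothesis HG : is_topological_group add opp zero.
Hypothesis Hm : is_metric d.
Hypothesis Hd : metric_induces_topology d.

Definition sub x y := add x (opp y).

Lemma d_nonneg x y : 0 <= d x y. Proof. exact: (proj1 Hm). Qed.
Lemma d_eq0 x y : d x y = 0 <-> x = y. Proof. exact: (proj1 (proj2 Hm)). Qed.
Lemma d_sym x y : d x y = d y x. Proof. exact: (proj1 (proj2 (proj2 Hm))). Qed.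
Lemma d_tri x y z : d x z <= d x y + d y z. Proof. exact: (proj2 (proj2 (proj2 Hm))). Qed.
Lemma d_xx x : d x x = 0. Proof. by apply/d_eq0. Qed.
Lemma d_pos x y : x <> y -> 0 < d x y.
Proof. move=> nxy; have := d_nonneg x y => h.
destruct (Rle_lt_or_eq_dec _ _ h) as [h'|h'] => //. by case: nxy; apply/d_eq0. Qed.

Lemma ball_nbhs x e : 0 < e -> nbhs x (fun y => d x y < e).
Proof. move=> he; apply/(Hd x); exists e; split => //. Qed.

Lemma nbhs_ball x U : nbhs x U -> exists e, 0 < e /\ forall y, d x y < e -> U y.
Proof. move=> h; exact/(Hd x). Qed.

Lemma addA x y z : add x (add y z) = add (add x y) z. Proof. by case: HG. Qed.
Lemma add0x x : add zero x = x. Proof. by case: HG => _ []. Qed.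
Lemma addx0 x : add x zero = x. Proof. by case: HG => _ [_ []]. Qed.
Lemma addNx x : add (opp x) x = zero. Proof. by case: HG => _ [_ [_ []]]. Qed.
Lemma addxN x : add x (opp x) = zero. Proof. by case: HG => _ [_ [_ [_ []]]]. Qed.
Lemma Hadd : continuous (fun p : G * G => add p.1 p.2). Proof. by case: HG => _ [_ [_ [_ [_ []]]]]. Qed.
Lemma Hopp : continuous opp. Proof. by case: HG => _ [_ [_ [_ [_ []]]]]. Qed.

Lemma addIl a x y : add a x = add a y -> x = y.
Proof. move=> h. by rewrite -(add0x x) -(add0x y) -(addNx a) -!addA h. Qed.
Lemma addIr a x y : add x a = add y a -> x = y.
Proof. move=> h. by rewrite -(addx0 x) -(addx0 y) -(addxN a) !addA h. Qed.
Lemma oppK x : opp (opp x) = x.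
Proof. apply: (addIl (opp x)). by rewrite addxN addNx. Qed.
Lemma oppI x y : opp x = opp y -> x = y.
Proof. by move=> h; rewrite -(oppK x) h oppK. Qed.
Lemma subIl a x y : sub a x = sub a y -> x = y.
Proof. by move=> /addIl /oppI. Qed.
Lemma subIr a x y : sub x a = sub y a -> x = y.
Proof. by move=> /addIr. Qed.

Lemma cont_sub (a b : G) (N : set G) : nbhs (add a (opp b)) N ->
  exists A B, nbhs a A /\ nbhs b B /\ forall x y, A x -> B y -> N (add x (opp y)).
Proof.
move=> hN.
have := Hadd (a, opp b) _ hN. simpl.
move=> [[A B'] /= [hA hB'] hAB].
have hB := Hopp b _ hB'.
exists A, (opp @^-1` B'). split => //. split => //.
move=> x y Ax By. exact: (hAB (x, opp y)).
Qed.

Lemma cont_sub_ball a b e : 0 < e -> exists r, 0 < r /\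
  forall x y, d a x < r -> d b y < r -> d (sub a b) (sub x y) < e.
Proof.
move=> he.
have [A [B [hA [hB hAB]]]] := cont_sub a b _ (ball_nbhs (sub a b) _ he).
have [r1 [r1p h1]] := nbhs_ball _ _ hA.
have [r2 [r2p h2]] := nbhs_ball _ _ hB.
exists (Rmin r1 r2); split; first by apply: Rmin_pos.
move=> x y hx hy; apply: hAB; [apply: h1|apply: h2].
- apply: Rlt_le_trans hx _; exact: Rmin_l.
- apply: Rlt_le_trans hy _; exact: Rmin_r.
Qed.

Lemma tuple_sep a b c e : sub a b <> sub c e -> exists r, 0 < r /\
  forall x y v w, d a x < r -> d b y < r -> d c v < r -> d e w < r ->
  sub x y <> sub v w.
Proof.
move=> hne.
have dp := d_pos _ _ hne.
have [r1 [r1p h1]] := cont_sub_ball a b (d (sub a b) (sub c e) / 2) ltac:(lra).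
have [r2 [r2p h2]] := cont_sub_ball c e (d (sub a b) (sub c e) / 2) ltac:(lra).
exists (Rmin r1 r2); split; first by apply: Rmin_pos.
move=> x y v w hx hy hv hw heq.
have m1 := Rmin_l r1 r2. have m2 := Rmin_r r1 r2.
have k1 := h1 x y ltac:(lra) ltac:(lra).
have k2 := h2 v w ltac:(lra) ltac:(lra).
rewrite -heq in k2.
have := d_tri (sub a b) (sub x y) (sub c e).
rewrite (d_sym (sub x y)). lra.
Qed.

Lemma fmin (A : Type) (s : list A) (Pr : A -> R -> Prop) :
  (forall x r r', 0 < r' -> r' <= r -> Pr x r -> Pr x r') ->
  (forall x, In x s -> exists r, 0 < r /\ Pr x r) ->
  exists r, 0 < r /\ forall x, In x s -> Pr x r.
Proof.
move=> mono; elim: s => [|a s IH] h.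
  exists 1; split => //; lra.
have [r1 [r1p h1]] := h a (or_introl erefl).
have [r2 [r2p h2]] := IH (fun x hx => h x (or_intror hx)).
exists (Rmin r1 r2); split; first by apply: Rmin_pos.
move=> x [<-|hx].
- apply: (mono _ r1) => //; [exact: Rmin_pos|exact: Rmin_l].
- apply: (mono _ r2); [exact: Rmin_pos|exact: Rmin_r|exact: h2].
Qed.


Definition skewL (F : list G) := forall x y v w, In x F -> In y F -> In v F -> In w F ->
  x <> y -> v <> w -> ~ ((x = v /\ y = w) \/ (x = w /\ y = v)) -> sub x y <> sub v w.

Definition Good p r (C : G -> Prop) := forall q, d p q < r -> q <> p -> C q.

Lemma good_mono p C r r' : 0 < r' -> r' <= r -> Good p r C -> Good p r' C.
Proof. move=> _ h g q hq; apply: g; lra. Qed.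

Lemma good_and p r1 r2 C1 C2 : Good p r1 C1 -> Good p r2 C2 ->
  Good p (Rmin r1 r2) (fun q => C1 q /\ C2 q).
Proof.
move=> g1 g2 q hq nq; have m1 := Rmin_l r1 r2; have m2 := Rmin_r r1 r2.
split; [apply: g1|apply: g2] => //; lra.
Qed.

Lemma good_and_ex p C1 C2 : (exists r, 0 < r /\ Good p r C1) ->
  (exists r, 0 < r /\ Good p r C2) -> exists r, 0 < r /\ Good p r (fun q => C1 q /\ C2 q).
Proof.
move=> [r1 [r1p g1]] [r2 [r2p g2]]; exists (Rmin r1 r2); split.
  exact: Rmin_pos.
exact: good_and.
Qed.
Arguments good_and_ex {p C1 C2}.

Lemma good_uniq p (C : G -> Prop) : (forall q1 q2, C q1 -> C q2 -> q1 = q2) ->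
  exists r, 0 < r /\ Good p r (fun q => ~ C q).
Proof.
move=> hu.
destruct (classic (exists q0, C q0)) as [[q0 hq0]|hn].
- destruct (classic (q0 = p)) as [e|ne].
  + exists 1; split; first lra. move=> q _ nqp Cq. apply: nqp. rewrite -e. exact: hu.
  + exists (d p q0); split; first by apply: d_pos => e; apply: ne.
    move=> q hq _ Cq. have e := hu _ _ Cq hq0. rewrite e in hq. lra.
- exists 1; split; first lra. move=> q _ _ Cq; apply: hn; by exists q.
Qed.

Definition Cond q y v w :=
  (q <> y /\ sub q y <> sub v w /\ sub y q <> sub v w /\ sub y v <> sub q w /\
      sub y v <> sub w q /\ (y <> v -> sub q y <> sub v q) /\
      (y <> v -> sub y q <> sub q v)).

Lemma cond_good F p y v w : skewL F -> In p F -> In y F -> In v F ->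
  exists r, 0 < r /\ Good p r (fun q => Cond q y v w).
Proof.
move=> sk hp hy hv.
have g1 := good_uniq p (fun q => q = y) ltac:(by move=> ? ? -> ->).
have g2 := good_uniq p (fun q => sub q y = sub v w)
  ltac:(by move=> q1 q2 h1 h2; apply: (subIr y); rewrite h1 h2).
have g3 := good_uniq p (fun q => sub y q = sub v w)
  ltac:(by move=> q1 q2 h1 h2; apply: (subIl y); rewrite h1 h2).
have g4 := good_uniq p (fun q => sub y v = sub q w)
  ltac:(by move=> q1 q2 h1 h2; apply: (subIr w); rewrite -h1 h2).
have g5 := good_uniq p (fun q => sub y v = sub w q)
  ltac:(by move=> q1 q2 h1 h2; apply: (subIl w); rewrite -h1 h2).
have g6 : exists r, 0 < r /\ Good p r (fun q => y <> v -> sub q y <> sub v q).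
  destruct (classic (y = v)) as [e|ne].
    exists 1; split; first lra. by move=> q _ _.
  have hne : sub p y <> sub v p.
    move=> heq.
    destruct (classic (p = y)) as [e1|n1].
      rewrite e1 in heq; apply: ne; apply: (subIr y); exact: heq.
    destruct (classic (p = v)) as [e2|n2].
      rewrite e2 in heq; apply: ne; apply: (subIl v); exact: heq.
    apply: (sk p y v p) => //; first by move=> e; apply: n2; rewrite e.
    move=> [[e _]|[_ e]]; [exact: n2|exact: ne].
  have [r [rp hr]] := tuple_sep _ _ _ _ hne.
  exists r; split => // q hq _ _. apply: hr => //; rewrite d_xx; lra.
have g7 : exists r, 0 < r /\ Good p r (fun q => y <> v -> sub y q <> sub q v).
  destruct (classic (y = v)) as [e|ne].
    exists 1; split; first lra. by move=> q _ _.
  have hne : sub y p <> sub p v.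
    move=> heq.
    destruct (classic (p = y)) as [e1|n1].
      rewrite e1 in heq; apply: ne; apply: (subIl y); exact: heq.
    destruct (classic (p = v)) as [e2|n2].
      rewrite e2 in heq; apply: ne; apply: (subIr v); exact: heq.
    apply: (sk y p p v) => //; first by move=> e; apply: n1; rewrite e.
    move=> [[e _]|[e _]]; [apply: n1|exact: ne]; by rewrite e.
  have [r [rp hr]] := tuple_sep _ _ _ _ hne.
  exists r; split => // q hq _ _. apply: hr => //; rewrite d_xx; lra.
have := good_and_ex (good_and_ex (good_and_ex g1 g2) (good_and_ex g3 g4))
   (good_and_ex (good_and_ex g5 g6) g7).
move=> [r [rp hr]]; exists r; split => // q hq nq.
have [[[c1 c2] [c3 c4]] [[c5 c6] c7]] := hr q hq nq.
by do !split.
Qed.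


Lemma good_all (A : Type) (s : list A) p (C : A -> G -> Prop) :
  (forall x, In x s -> exists r, 0 < r /\ Good p r (C x)) ->
  exists r, 0 < r /\ Good p r (fun q => forall x, In x s -> C x q).
Proof.
move=> h.
have [r [rp hr]] := fmin _ s (fun x r => Good p r (C x))
  (fun x r r' h1 h2 h3 => good_mono _ _ _ _ h1 h2 h3) h.
exists r; split => // q hq nq x hx; exact: hr.
Qed.

Lemma all_good F p : skewL F -> In p F -> exists r, 0 < r /\
  Good p r (fun q => forall y, In y F -> forall v, In v F -> forall w, In w F -> Cond q y v w).
Proof.
move=> sk hp.
apply: (good_all _ F p (fun y q => forall v, In v F -> forall w, In w F -> Cond q y v w)) => y hy.
apply: (good_all _ F p (fun v q => forall w, In w F -> Cond q y v w)) => v hv.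
apply: (good_all _ F p (fun w q => Cond q y v w)) => w hw.
exact: (cond_good F p y v w sk hp hy hv).
Qed.

Variable P : set G.
Hypothesis HP : perfect_set P.

Lemma ext1 F p e : (forall z, In z F -> P z) -> skewL F -> In p F -> 0 < e ->
  exists q, P q /\ ~ In q F /\ q <> p /\ d p q < e /\ skewL (q :: F).
Proof.
move=> FP sk hp he.
have [r [rp hr]] := all_good F p sk hp.
have lp : limit_point P p by rewrite HP.2; exact: FP.
have [q [/eqP nqp Pq bq]] := lp _ (ball_nbhs p _ (Rmin_pos _ _ rp he)).
have m1 := Rmin_l r e; have m2 := Rmin_r r e.
have C := hr q ltac:(lra) nqp.
exists q; split => //; split.
  move=> hq. by have [c1 _] := C q hq p hp p hp.
split => //; split; first lra.
move=> x y v w [<-|hx] [<-|hy] [<-|hv] [<-|hw] nxy nvw npair heq //.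
- by apply: npair; left; split => //; apply: (subIl q).
- destruct (classic (y = v)) as [e1|n1].
    by apply: npair; right.
  by have [_ [_ [_ [_ [_ [c6 _]]]]]] := C y hy v hv v hv; apply: c6.
- by have [_ [c2 _]] := C y hy v hv w hw.
- destruct (classic (x = w)) as [e1|n1].
    by apply: npair; right.
  by have [_ [_ [_ [_ [_ [_ c7]]]]]] := C x hx w hw w hw; apply: c7.
- by apply: npair; left; split => //; apply: (subIr q).
- by have [_ [_ [c3 _]]] := C x hx v hv w hw.
- by have [_ [_ [_ [c4 _]]]] := C x hx y hy w hw; apply: c4.
- by have [_ [_ [_ [_ [c5 _]]]]] := C x hx y hy v hv; apply: c5.
- exact: (sk x y v w).
Qed.


Lemma ext_all F0 e : 0 < e -> forall l F, incl l F0 -> incl F0 F ->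
  (forall z, In z F -> P z) -> skewL F -> (forall z, In z F -> exists a, In a F0 /\ d z a < e) ->
  exists F', incl F F' /\ (forall z, In z F' -> P z) /\ skewL F' /\
    (forall p, In p l -> exists q, In q F' /\ q <> p /\ d p q < e) /\
    (forall z, In z F' -> exists a, In a F0 /\ d z a < e).
Proof.
move=> he; elim => [|p l IH] F hl h0 FP sk hF.
  exists F; split; first exact: incl_refl.
  do 3 (split => //).
move: (hl p (or_introl erefl)) => p0.
have [q [Pq [nqF [nqp [dq skq]]]]] := ext1 F p e FP sk (h0 p p0) he.
have [F' [i1 [FP' [sk' [h1 h2]]]]] := IH (q :: F) (fun z hz => hl z (or_intror hz))
  (fun z hz => or_intror (h0 z hz)) ltac:(by move=> z [<-|hz]; [|apply: FP]) skq
  ltac:(move=> z [<-|hz]; [exists p; split => //; by rewrite d_sym| exact: hF]).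
exists F'; split; first by move=> z hz; apply: i1; right.
do 2 (split => //); split => //.
move=> p' [<-|hp']; last exact: h1.
exists q; split; [apply: i1; left|split] => //.
Qed.

Definition boxskew (F : list G) r := forall a b c e, In a F -> In b F -> In c F -> In e F ->
  a <> b -> c <> e -> ~ ((a = c /\ b = e) \/ (a = e /\ b = c)) ->
  forall x y v w, d a x < r -> d b y < r -> d c v < r -> d e w < r -> sub x y <> sub v w.

Lemma box_ex F : skewL F -> exists r, 0 < r /\ boxskew F r.
Proof.
move=> sk.
have := fmin _ F (fun a r => forall b, In b F -> forall c, In c F -> forall e, In e F ->
  a <> b -> c <> e -> ~ ((a = c /\ b = e) \/ (a = e /\ b = c)) ->
  forall x y v w, d a x < r -> d b y < r -> d c v < r -> d e w < r -> sub x y <> sub v w).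
case.
- move=> a r r' h1 h2 H b hb c hc e he n1 n2 n3 x y v w k1 k2 k3 k4.
  apply: (H b hb c hc e he) => //; lra.
- move=> a ha.
  apply: (fmin _ F (fun b r => forall c, In c F -> forall e, In e F ->
    a <> b -> c <> e -> ~ ((a = c /\ b = e) \/ (a = e /\ b = c)) ->
    forall x y v w, d a x < r -> d b y < r -> d c v < r -> d e w < r -> sub x y <> sub v w)).
    move=> b r r' h1 h2 H c hc e he n1 n2 n3 x y v w k1 k2 k3 k4.
    apply: (H c hc e he) => //; lra.
  move=> b hb.
  apply: (fmin _ F (fun c r => forall e, In e F ->
    a <> b -> c <> e -> ~ ((a = c /\ b = e) \/ (a = e /\ b = c)) ->
    forall x y v w, d a x < r -> d b y < r -> d c v < r -> d e w < r -> sub x y <> sub v w)).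
    move=> c r r' h1 h2 H e he n1 n2 n3 x y v w k1 k2 k3 k4.
    apply: (H e he) => //; lra.
  move=> c hc.
  apply: (fmin _ F (fun e r =>
    a <> b -> c <> e -> ~ ((a = c /\ b = e) \/ (a = e /\ b = c)) ->
    forall x y v w, d a x < r -> d b y < r -> d c v < r -> d e w < r -> sub x y <> sub v w)).
    move=> e r r' h1 h2 H n1 n2 n3 x y v w k1 k2 k3 k4.
    apply: H => //; lra.
  move=> e he.
  destruct (classic (a <> b /\ c <> e /\ ~ ((a = c /\ b = e) \/ (a = e /\ b = c)))) as [[n1 [n2 n3]]|nv].
    have [r [rp hr]] := tuple_sep a b c e (sk a b c e ha hb hc he n1 n2 n3).
    by exists r; split => // _ _ _; apply: hr.
  exists 1; split; first lra.
  by move=> n1 n2 n3; case: nv.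
- move=> r [rp hr]; exists r; split => //.
  move=> a b c e ha hb hc he; exact: (hr a ha b hb c hc e he).
Qed.

Lemma step F0 r0 : (forall z, In z F0 -> P z) -> skewL F0 -> 0 < r0 ->
  exists F1 r1, incl F0 F1 /\ (forall z, In z F1 -> P z) /\ skewL F1 /\ 0 < r1 /\
    r1 <= r0 / 4 /\ boxskew F1 r1 /\
    (forall p, In p F0 -> exists q, In q F1 /\ q <> p /\ d p q < r0 / 4) /\
    (forall z, In z F1 -> exists a, In a F0 /\ d z a < r0 / 4).
Proof.
move=> FP sk r0p.
have [F1 [i1 [FP1 [sk1 [h1 h2]]]]] := ext_all F0 (r0 / 4) ltac:(lra) F0 F0
  (incl_refl _) (incl_refl _) FP sk
  ltac:(move=> z hz; exists z; split => //; rewrite d_xx; lra).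
have [r [rp hr]] := box_ex F1 sk1.
exists F1, (Rmin r (r0 / 4)).
have m1 := Rmin_l r (r0/4); have m2 := Rmin_r r (r0/4).
do 3 (split => //); split; first by apply: Rmin_pos => //; lra.
split => //; split => //.
move=> a b c e ha hb hc he n1 n2 n3 x y v w k1 k2 k3 k4.
apply: (hr a b c e) => //; lra.
Qed.


Variable p0 : G.
Hypothesis Pp0 : P p0.

Definition Inv (s : list G * R) := (forall z, In z s.1 -> P z) /\ skewL s.1 /\
  0 < s.2 /\ s.2 <= 1 /\ boxskew s.1 s.2.
Definition Rel (s s' : list G * R) := incl s.1 s'.1 /\ s'.2 <= s.2 / 4 /\
  (forall p, In p s.1 -> exists q, In q s'.1 /\ q <> p /\ d p q < s.2 / 4) /\
  (forall z, In z s'.1 -> exists a, In a s.1 /\ d z a < s.2 / 4).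

Lemma step_ex s : exists s', Inv s -> Inv s' /\ Rel s s'.
Proof.
destruct (classic (Inv s)) as [[FP [sk [rp [r1 _]]]]|ni]; last by exists s.
have [F1 [r' [i1 [FP1 [sk1 [rp' [rl [bx [h1 h2]]]]]]]]] := step s.1 s.2 FP sk rp.
exists (F1, r') => _; split; split => //=; do 3 (split => //); lra.
Qed.

Definition next s := proj1_sig (cid (step_ex s)).

Fixpoint seqs n := match n with 0 => ([:: p0], 1) | S n => next (seqs n) end.

Lemma inv_rel n : Inv (seqs n) /\ Rel (seqs n) (seqs (S n)).
Proof.
elim: n => [|n [IH _]].
- have I0 : Inv (seqs 0).
    split; first by move=> z [<-|[]].
    split; first by move=> x y v w [<-|[]] [<-|[]].
    split; first (simpl; lra). split; first (simpl; lra).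
    by move=> a b c e [<-|[]] [<-|[]].
  split => //. exact: (proj2 (proj2_sig (cid (step_ex (seqs 0))) I0)).
- have I1 := proj1 (proj2_sig (cid (step_ex (seqs n))) IH).
  split => //.
  exact: (proj2 (proj2_sig (cid (step_ex (seqs n.+1))) I1)).
Qed.

Definition Fs n := (seqs n).1.
Definition rs n := (seqs n).2.

Lemma rs_pos n : 0 < rs n. Proof. by have [[_ [_ [h _]]] _] := inv_rel n. Qed.
Lemma rs_dec n : rs (S n) <= rs n / 4. Proof. by have [_ [_ [h _]]] := inv_rel n. Qed.
Lemma rs_bound n : rs n * (INR n + 1) <= 1.
Proof.
elim: n => [|n IH]; first by rewrite /rs /=; lra.
have h1 := rs_dec n. have h2 := rs_pos n. have h3 := rs_pos (S n).
have h4 := pos_INR n. rewrite S_INR. nra.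
Qed.
Lemma rs_mono n m : le n m -> rs m <= rs n.
Proof.
elim => [|m' _ IH]; first lra.
have := rs_dec m'; have := rs_pos m'; lra.
Qed.
Lemma rs_small e : 0 < e -> exists N, forall m, le N m -> rs m < e.
Proof.
move=> he.
have [N [h1 h2]] := archimed_cor1 e he.
exists N => m hm.
have := rs_mono N m hm. have := rs_bound N. have := rs_pos N.
have hN : 0 < INR N by apply: lt_0_INR.
have : 1 < e * INR N.
  have := Rmult_lt_compat_r (INR N) _ _ hN h1.
  rewrite Rinv_l; last lra. lra.
nra.
Qed.

Lemma Fs_mono n m : le n m -> incl (Fs n) (Fs m).
Proof.
elim => [|m' _ IH]; first exact: incl_refl.
have [_ [h _]] := inv_rel m'. exact: incl_tran IH h.
Qed.

Lemma approx n m : le n m -> forall z, In z (Fs m) -> exists a, In a (Fs n) /\ d z a <= (rs n - rs m) / 2.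
Proof.
elim => [|m' hnm IH].
  move=> z hz; exists z; split => //; rewrite d_xx; lra.
move=> z hz.
have [_ [_ [hr [_ h2]]]] := inv_rel m'.
have [b [hb db]] := h2 z hz.
have [a [ha da]] := IH b hb.
exists a; split => //.
have := d_tri z b a. have := rs_pos m'. rewrite /rs in da db hr *. lra.
Qed.

Definition Dset := fun z => exists n, In z (Fs n).

Lemma closure_pt x : closure Dset x -> forall e, 0 < e -> exists z, Dset z /\ d x z < e.
Proof.
move=> cx e he.
have [z [Dz bz]] := cx _ (ball_nbhs x e he).
by exists z.
Qed.

Lemma box_pt x : closure Dset x -> forall n, exists a, In a (Fs n) /\ d a x < rs n.
Proof.
move=> cx n.
have [z [[k hk] dz]] := closure_pt x cx (rs n / 2) ltac:(have := rs_pos n; lra).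
have hz : In z (Fs (n + k)) by apply: (Fs_mono k) => //; lia.
have [a [ha da]] := approx n (n + k) ltac:(lia) z hz.
exists a; split => //.
have := d_tri a z x. have := rs_pos (n + k). rewrite (d_sym a z) (d_sym z x). lra.
Qed.

Lemma sep x y : exists N, forall n, le N n -> x <> y -> 2 * rs n < d x y.
Proof.
destruct (classic (x = y)) as [e|ne].
  by exists 0%nat.
have dp := d_pos _ _ ne.
have [N hN] := rs_small (d x y / 2) ltac:(lra).
exists N => n hn _. have := hN n hn. lra.
Qed.

Lemma close_eq a x y n : d a x < rs n -> d a y < rs n -> (x <> y -> 2 * rs n < d x y) -> x = y.
Proof.
move=> h1 h2 h3.
destruct (classic (x = y)) as [e|ne] => //.
have := h3 ne. have := d_tri x a y. rewrite (d_sym x a). lra.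
Qed.

Lemma main_sec : exists Q : set G, Q `<=` P /\ perfect_set Q /\ Q !=set0 /\ skew_set add opp Q.
Proof.
exists (closure Dset).
split.
  have -> : P = closure P by apply/closure_id; exact: HP.1.
  apply: closureS => z [n hn].
  by have [[FP _] _] := inv_rel n; apply: FP.
split.
  split; first exact: closed_closure.
  apply/seteqP; split => x.
  - move=> lx.
    have -> : closure Dset = closure (closure Dset) by apply/closure_id; exact: closed_closure.
    move=> B hB. have [y [_ Qy By]] := lx B hB. by exists y.
  - move=> cx U hU.
    have [e [he hU']] := nbhs_ball _ _ hU.
    have [z [[k hk] dz]] := closure_pt x cx (e / 2) ltac:(lra).
    have [N hN] := rs_small (e / 2) ltac:(lra).
    have hz : In z (Fs (k + N)) by apply: (Fs_mono k) => //; lia.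
    have [_ [_ [_ [h1 _]]]] := inv_rel (k + N).
    have [q [hq [nqz dq]]] := h1 z hz.
    have rk := hN (k + N)%nat ltac:(lia). have := rs_pos (k + N).
    rewrite /rs in rk * => rp.
    have Dz : Dset z by exists k.
    have Dq : Dset q by exists (S (k + N)).
    have dxq := d_tri x z q.
    destruct (classic (x = z)) as [exz|nxz].
    + exists q; split; [apply/eqP => exq; apply: nqz; by rewrite exq| exact: subset_closure|].
      apply: hU'; lra.
    + exists z; split; [apply/eqP => e'; apply: nxz; by rewrite e'|exact: subset_closure|].
      apply: hU'; lra.
split.
  exists p0; apply: subset_closure; exists 0%nat; by left.
move=> x y v w Qx Qy Qv Qw nxy nvw npair.
have [N1 h1] := sep x y. have [N2 h2] := sep v w. have [N3 h3] := sep x v.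
have [N4 h4] := sep y w. have [N5 h5] := sep x w. have [N6 h6] := sep y v.
pose n := (N1 + N2 + N3 + N4 + N5 + N6)%nat.
have [a [ha da]] := box_pt x Qx n.
have [b [hb db]] := box_pt y Qy n.
have [c [hc dc]] := box_pt v Qv n.
have [e [he de]] := box_pt w Qw n.
have [[_ [_ [_ [_ bx]]]] _] := inv_rel n.
apply: (bx a b c e ha hb hc he) => //.
- move=> eab; rewrite -eab in db.
  apply: nxy; apply: (close_eq a x y n) => //; apply: h1; rewrite /n; lia.
- move=> ece; rewrite -ece in de.
  apply: nvw; apply: (close_eq c v w n) => //; apply: h2; rewrite /n; lia.
- move=> [[eac ebe]|[eae ebc]].
  + rewrite -eac in dc; rewrite -ebe in de.
    apply: npair; left; split.
      apply: (close_eq a x v n) => //; apply: h3; rewrite /n; lia.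
    apply: (close_eq b y w n) => //; apply: h4; rewrite /n; lia.
  + rewrite -eae in de; rewrite -ebc in dc.
    apply: npair; right; split.
      apply: (close_eq a x w n) => //; apply: h5; rewrite /n; lia.
    apply: (close_eq b y v n) => //; apply: h6; rewrite /n; lia.
Qed.

End S.

Theorem lemma3p4 (G : topologicalType) (add : G -> G -> G) (opp : G -> G) (zero : G)
    (HG : is_topological_group add opp zero) (HPolish : polish_space G)
    (P : set G) (HP : perfect_set P) (HPne : P !=set0) :
  exists Q : set G, Q `<=` P /\ perfect_set Q /\ Q !=set0 /\ skew_set add opp Q.
Proof.
case: HPolish => _ [d [Hm [Hd _]]].
case: HPne => p0 Pp0.
exact: (main_sec G add opp zero d HG Hm Hd P HP p0 Pp0).
Qed.
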